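(* Let $p>3$ be a prime and for $1\le k\le p-1$ define $$G(p,k)=\frac{p^2\binom{2p}{p}\binom{2p+2k}{p+k}\binom{2p-2k}{p-k}\binom{p+k}{p}}{2^{8p-2k-4}(2p+2k-1)\binom{2k}{k}}.$$ Then $$G\Big(p,\frac{p+1}{2}\Big)\equiv(-1)^{(p-1)/2}p\left(1-3pq_p(2)+6p^2q_p(2)^2\right)\pmod{p^4}.$$
   Context: $q_p(2)=(2^{p-1}-1)/p$ is the Fermat quotient. Congruences between rationals modulo $p^m$ mean the difference is $p^m$ times a rational with denominator prime to $p$. *)

(* Defs.v *)
From HB Require Import structures.
From mathcomp Require Import all_boot all_order all_algebra.
Set Implicit Arguments. Unset Strict Implicit. Unset Printing Implicit Defensive.
Import Order.TTheory GRing.Theory Num.Theory.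
Local Open Scope ring_scope.

Definition rat_eqmod (p m : nat) (x y : rat) : Prop :=
  exists r : rat, x - y = (p ^ m)%N%:R * r /\ coprime p `|denq r|%N.

Definition fermat_q2 (p : nat) : rat := ((2 ^ p.-1 - 1)%N)%:R / p%:R.

Definition G (p k : nat) : rat :=
  ((p ^ 2 * 'C(2 * p, p) * 'C(2 * p + 2 * k, p + k) * 'C(2 * p - 2 * k, p - k)
     * 'C(p + k, p))%N)%:R
  / ((2 ^ (8 * p - 2 * k - 4) * (2 * p + 2 * k - 1) * 'C(2 * k, k))%N)%:R.

(* Main.v *)
Require Import Defs.
From HB Require Import structures.
From mathcomp Require Import all_boot all_order all_algebra.
From mathcomp Require Import ring zify.
Import Order.TTheory GRing.Theory Num.Theory.
Local Open Scope ring_scope.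

Definition pint (p : nat) (x : rat) : Prop :=
  exists (a : int) (b : nat), [/\ coprime p b, (0 < b)%N & x = a%:~R / b%:R].

Lemma pint_int p (z : int) : pint p z%:~R.
Proof. by exists z, 1%N; rewrite coprimen1 divr1. Qed.

Lemma pint_nat p (n : nat) : pint p n%:R.
Proof. by exists n%:Z, 1%N; rewrite coprimen1 divr1. Qed.

Lemma pint0 p : pint p 0. Proof. exact: (pint_nat p 0). Qed.
Lemma pint1 p : pint p 1. Proof. exact: (pint_nat p 1). Qed.

Lemma pintD p x y : pint p x -> pint p y -> pint p (x + y).
Proof.
move=> [a [b [cb b0 ->]]] [c [d [cd d0 ->]]].
exists (a * d%:Z + c * b%:Z), (b * d)%N; split; first by rewrite coprimeMr cb cd.
  by rewrite muln_gt0 b0 d0.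
have b0' : b%:R != 0 :> rat by rewrite pnatr_eq0 -lt0n.
have d0' : d%:R != 0 :> rat by rewrite pnatr_eq0 -lt0n.
rewrite natrM rmorphD !rmorphM /=.
by field; rewrite b0' d0'.
Qed.

Lemma pintM p x y : pint p x -> pint p y -> pint p (x * y).
Proof.
move=> [a [b [cb b0 ->]]] [c [d [cd d0 ->]]].
exists (a * c), (b * d)%N; split; first by rewrite coprimeMr cb cd.
  by rewrite muln_gt0 b0 d0.
by rewrite natrM rmorphM /= mulrACA invfM.
Qed.

Lemma pintN p x : pint p x -> pint p (- x).
Proof. by move=> [a [b [cb b0 ->]]]; exists (- a), b; rewrite rmorphN mulNr. Qed.

Lemma pintB p x y : pint p x -> pint p y -> pint p (x - y).
Proof. by move=> hx hy; apply: pintD => //; apply: pintN. Qed.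

Lemma pintX p x n : pint p x -> pint p (x ^+ n).
Proof. by move=> hx; elim: n => [|n IH]; [rewrite expr0; exact: pint1 | rewrite exprS; exact: pintM]. Qed.

Lemma pintV p m : coprime p m -> (0 < m)%N -> pint p (m%:R)^-1.
Proof. by move=> cm m0; exists 1, m; rewrite div1r. Qed.

Lemma pint_prod p (I : Type) (r : seq I) (P : pred I) (F : I -> rat) :
  (forall i, P i -> pint p (F i)) -> pint p (\prod_(i <- r | P i) F i).
Proof. by move=> h; apply: (big_ind (pint p)) => //; [exact: pint1 | exact: pintM]. Qed.

Lemma pint_sum p (I : Type) (r : seq I) (P : pred I) (F : I -> rat) :
  (forall i, P i -> pint p (F i)) -> pint p (\sum_(i <- r | P i) F i).
Proof. by move=> h; apply: (big_ind (pint p)) => //; [exact: pint0 | exact: pintD]. Qed.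

Lemma pint_den p x : pint p x -> coprime p `|denq x|%N.
Proof.
move=> [a [b [cb b0 ->]]].
have -> : (b%:R : rat) = (b%:Z)%:~R by [].
move: cb b0; have -> : b = `|b%:Z|%N by [].
move: (b%:Z) => d.
case: divqP => [|k y k0] cb b0 //.
apply: coprime_dvdr cb.
by rewrite abszM dvdn_mull.
Qed.

Definition eqm (p k : nat) (x y : rat) := exists r, pint p r /\ x = y + (p%:R) ^+ k * r.

Lemma pint_half p : coprime p 2 -> pint p (2%:R)^-1.
Proof. by move=> c; apply: pintV. Qed.

Lemma prod_exp p (s : seq rat) (t : rat) : coprime p 2 ->
  (forall x, x \in s -> pint p x) -> pint p t ->
  exists r, pint p r /\
   \prod_(x <- s) (1 + p%:R * t * x) =
     1 + p%:R * t * (\sum_(x <- s) x)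
     + (p%:R * t) ^+ 2 / 2%:R * ((\sum_(x <- s) x) ^+ 2 - \sum_(x <- s) x ^+ 2)
     + p%:R ^+ 3 * r.
Proof.
move=> c2 hs ht; elim: s hs => [|y s IH] hs.
  by exists 0; split; [exact: pint0 | rewrite !big_nil; ring].
have hs' : forall x, x \in s -> pint p x by move=> x hx; apply: hs; rewrite in_cons hx orbT.
have [r [hr E]] := IH hs'.
have hy : pint p y by apply: hs; rewrite inE eqxx.
have hsum : pint p (\sum_(x <- s) x) by rewrite big_seq_cond; apply: pint_sum => x /andP[hx _]; apply: hs'.
have hsum2 : pint p (\sum_(x <- s) x ^+ 2) by rewrite big_seq_cond; apply: pint_sum => x /andP[hx _]; apply: pintX; apply: hs'.
rewrite !big_cons E.
set e1 := \sum_(x <- s) x; set e2 := \sum_(x <- s) x ^+ 2.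
exists (r * (1 + p%:R * t * y) + t ^+ 3 * y * (e1 ^+ 2 - e2) / 2%:R); split.
  apply: pintD; first by apply: pintM => //; apply: pintD; [exact: pint1| apply: pintM => //; apply: pintM => //; exact: pint_nat].
  apply: pintM; last exact: pint_half.
  apply: pintM; first by apply: pintM => //; apply: pintX.
  by apply: pintB => //; apply: pintX.
by field.
Qed.


Lemma eqm_refl (p k : nat) x : eqm p k x x.
Proof. by exists 0; split; [exact: pint0 | rewrite mulr0 addr0]. Qed.

Lemma eqm_sym (p k : nat) x y : eqm p k x y -> eqm p k y x.
Proof. by move=> [r [hr ->]]; exists (- r); split; [exact: pintN | ring]. Qed.

Lemma eqm_trans (p k : nat) x y z : eqm p k x y -> eqm p k y z -> eqm p k x z.
Proof.
move=> [r [hr ->]] [s [hs ->]]; exists (s + r); split; [exact: pintD | ring].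
Qed.

Lemma eqmD (p k : nat) x y u v : eqm p k x y -> eqm p k u v -> eqm p k (x + u) (y + v).
Proof.
move=> [r [hr ->]] [s [hs ->]]; exists (r + s); split; [exact: pintD | ring].
Qed.

Lemma eqmN (p k : nat) x y : eqm p k x y -> eqm p k (- x) (- y).
Proof. by move=> [r [hr ->]]; exists (- r); split; [exact: pintN | ring]. Qed.

Lemma eqmB (p k : nat) x y u v : eqm p k x y -> eqm p k u v -> eqm p k (x - u) (y - v).
Proof. by move=> h1 h2; apply: eqmD => //; apply: eqmN. Qed.

Lemma eqmMl (p k : nat) c x y : pint p c -> eqm p k x y -> eqm p k (c * x) (c * y).
Proof. by move=> hc [r [hr ->]]; exists (c * r); split; [exact: pintM | ring]. Qed.

Lemma eqmM (p k : nat) x y u v : pint p y -> pint p u -> eqm p k x y -> eqm p k u v ->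
  eqm p k (x * u) (y * v).
Proof.
move=> hy hu [r [hr ->]] [s [hs E]]; exists (r * u + y * s); split.
  by apply: pintD; apply: pintM.
rewrite E; ring.
Qed.

Lemma eqm_sum (p k : nat) (I : eqType) (s : seq I) (F G : I -> rat) :
  (forall i, i \in s -> eqm p k (F i) (G i)) ->
  eqm p k (\sum_(i <- s) F i) (\sum_(i <- s) G i).
Proof.
elim: s => [|i s IH] h; first by rewrite !big_nil; exact: eqm_refl.
rewrite !big_cons; apply: eqmD; first by apply: h; rewrite inE eqxx.
by apply: IH => j hj; apply: h; rewrite in_cons hj orbT.
Qed.

Lemma eqm_pmul (p k : nat) x y : eqm p k x y -> eqm p k.+1 (p%:R * x) (p%:R * y).
Proof. by move=> [r [hr ->]]; exists r; split => //; rewrite exprS; ring. Qed.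

Lemma eqm_lower (p k : nat) x y : eqm p k.+1 x y -> eqm p k x y.
Proof.
move=> [r [hr ->]]; exists (p%:R * r); split; first by apply: pintM => //; exact: pint_nat.
by rewrite exprS; ring.
Qed.

Arguments eqm_refl {p k x}.
Arguments eqm_sym {p k x y}.
Arguments eqm_trans {p k x y z}.
Arguments eqmD {p k x y u v}.
Arguments eqmN {p k x y}.
Arguments eqmB {p k x y u v}.
Arguments eqmMl {p k c x y}.
Arguments eqmM {p k x y u v}.
Arguments eqm_sum {p k I s F G}.
Arguments eqm_pmul {p k x y}.
Arguments eqm_lower {p k x y}.

Lemma eqm_mul_pow p k l x y : pint p x -> pint p y -> (k <= l)%N ->
  eqm p k (p%:R ^+ l * x) (p%:R ^+ l * y).
Proof.
move=> hx hy kl; exists (p%:R ^+ (l - k) * (x - y)); split.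
  by apply: pintM; [apply: pintX; exact: pint_nat | exact: pintB].
by rewrite mulrA -exprD subnKC //; ring.
Qed.

Lemma inv_sq_cong p x y c : x != 0 -> y != 0 -> pint p x -> pint p y ->
  pint p x^-1 -> pint p y^-1 ->
  pint p c -> x = y + p%:R * c -> eqm p 1 (x ^+ 2)^-1 (y ^+ 2)^-1.
Proof.
move=> x0 y0 hx' hy' hx hy hc E.
exists (- c * (x + y) * (x^-1) ^+ 2 * (y^-1) ^+ 2); split.
  apply: pintM; last exact: pintX.
  apply: pintM; last exact: pintX.
  by apply: pintM; [exact: pintN | exact: pintD].
rewrite E in x0 *; field; rewrite x0 y0 //.
Qed.

Lemma cop_lt p i : prime p -> (0 < i < p)%N -> coprime p i.
Proof.
move=> pp /andP[i0 ip]; rewrite prime_coprime //; apply/negP => /dvdn_leq.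
by move=> /(_ i0); rewrite leqNgt ip.
Qed.

Lemma pint_invn p i : prime p -> (0 < i < p)%N -> pint p (i%:R)^-1.
Proof. by move=> pp hi; apply: pintV; [exact: cop_lt | case/andP: hi]. Qed.

Lemma sum_inv_sq p : prime p -> (3 < p)%N ->
  eqm p 1 (\sum_(1 <= j < p) ((j%:R : rat) ^+ 2)^-1) 0.
Proof.
move=> pp p3.
have p0 : (0 < p)%N by rewrite prime_gt0.
have c2 : coprime p 2 by rewrite prime_coprime //; apply/negP => /dvdn_leq; move=> /(_ isT); lia.
have c3 : coprime p 3 by rewrite prime_coprime //; apply/negP => /dvdn_leq; move=> /(_ isT); lia.
set f := fun j : nat => ((j%:R : rat) ^+ 2)^-1.
have -> : \sum_(1 <= j < p) f j = \sum_(i < p) f i.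
  by rewrite -(big_mkord xpredT f) (big_ltn p0) /f expr0n /= invr0 add0r.
set S := \sum_(i < p) f i.
pose sg := fun i : 'I_p => Ordinal (ltn_pmod (2 * i) p0).
have sg_inj : injective sg.
  have key : forall i j : nat, (j <= i < p)%N -> ((2 * i) %% p = (2 * j) %% p)%N -> i = j.
    move=> i j /andP[ji ip] /eqP; rewrite eqn_mod_dvd ?leq_mul2l ?ji ?orbT //.
    rewrite -mulnBr Gauss_dvdr //.
    case: (posnP (i - j)) => [|h /(dvdn_leq h)]; lia.
  move=> i j /(congr1 val) /= E; apply: val_inj => /=.
  case: (leqP j i) => h.
    by apply: key => //; rewrite h ltn_ord.
  by apply/esym/key => //; rewrite (ltnW h) ltn_ord.
have E1 : S = \sum_(i < p) f (sg i) by exact: (reindex_inj sg_inj).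
have E2 : eqm p 1 S (\sum_(i < p) f (2 * i)%N).
  rewrite E1 /=; apply: eqm_sum => i _ /=.
  case: (posnP i) => [->|i0].
    by rewrite muln0 mod0n; exact: eqm_refl.
  have ci : coprime p i by apply: cop_lt => //; rewrite i0 ltn_ord.
  have c2i : coprime p (2 * i) by rewrite coprimeMr c2 ci.
  have cm : coprime p ((2 * i) %% p)%N by rewrite coprime_modr.
  have m0 : (0 < ((2 * i) %% p)%N)%N.
    by rewrite lt0n; apply/negP => /eqP h; move: cm; rewrite h /coprime gcdn0 => /eqP p1; rewrite p1 in pp.
  apply: (@inv_sq_cong p _ _ (- (((2 * i) %/ p)%N)%:R)).
  - by rewrite pnatr_eq0 -lt0n.
  - by rewrite pnatr_eq0 muln_eq0 negb_or -!lt0n i0.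
  - exact: pint_nat.
  - exact: pint_nat.
  - by apply: pintV.
  - by apply: pintV => //; rewrite muln_gt0 i0.
  - by apply: pintN; apply: pint_nat.
  - by rewrite {2}(divn_eq (2 * i) p) natrD natrM; ring.
have E3 : \sum_(i < p) f (2 * i)%N = S / 4%:R.
  rewrite /S mulr_suml; apply: eq_bigr => i _; rewrite /f natrM exprMn invfM mulrC; congr (_ * _).
rewrite E3 in E2.
have E4 : S = 4%:R / 3%:R * (S - S / 4%:R) by field.
rewrite E4 -(mulr0 (4%:R / 3%:R)); apply: eqmMl.
  by apply: pintM; [exact: pint_nat | apply: pintV].
rewrite -(subrr (S / 4%:R)); apply: eqmB => //; exact: eqm_refl.
Qed.

Lemma split_sum n (F : nat -> rat) :
  \sum_(1 <= j < (2 * n + 1)%N) F j = \sum_(1 <= j < n.+1) (F j + F (2 * n + 1 - j)%N).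
Proof.
rewrite (big_cat_nat _ (n := n.+1)) //=; last by lia.
rewrite big_split /=; congr (_ + _).
rewrite -(add1n n) big_addn.
have -> : (2 * n + 1 - n = 1 + n)%N by lia.
rewrite big_nat_rev /=.
apply: eq_big_nat => i /andP[i1 i2]; congr F; lia.
Qed.

Lemma coprime2 p : prime p -> (3 < p)%N -> coprime p 2.
Proof. by move=> pp p3; rewrite prime_coprime //; apply/negP => /dvdn_leq; move=> /(_ isT); lia. Qed.

Lemma H2_half p n : prime p -> (3 < p)%N -> p = (2 * n + 1)%N ->
  eqm p 1 (\sum_(1 <= j < n.+1) ((j%:R : rat) ^+ 2)^-1) 0.
Proof.
move=> pp p3 hpn.
have := sum_inv_sq p pp p3; rewrite hpn split_sum -hpn => H.
have H' : eqm p 1 (\sum_(1 <= j < n.+1) (((j%:R : rat) ^+ 2)^-1 + (((p - j)%N)%:R ^+ 2)^-1))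
                   (\sum_(1 <= j < n.+1) (2%:R * ((j%:R : rat) ^+ 2)^-1)).
  apply: eqm_sum => j; rewrite mem_index_iota => /andP[j1 jn].
  rewrite mulr2n mulrDl mul1r; apply: eqmD; first exact: eqm_refl.
  rewrite -(sqrrN (j%:R)).
  apply: (@inv_sq_cong p _ _ 1).
  - by rewrite pnatr_eq0 -lt0n subn_gt0; lia.
  - by rewrite oppr_eq0 pnatr_eq0 -lt0n.
  - exact: pint_nat.
  - by apply: pintN; apply: pint_nat.
  - by apply: pint_invn => //; lia.
  - by rewrite invrN; apply: pintN; apply: pint_invn => //; lia.
  - exact: pint1.
  - by rewrite natrB ?mulr1; [ring | lia].
have H2 : eqm p 1 (\sum_(1 <= j < n.+1) (2%:R * ((j%:R : rat) ^+ 2)^-1)) 0.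
  by apply: eqm_trans H; apply: eqm_sym.
rewrite -mulr_sumr in H2.
have -> : \sum_(1 <= j < n.+1) ((j%:R : rat) ^+ 2)^-1 =
   2%:R^-1 * (2%:R * \sum_(1 <= j < n.+1) ((j%:R : rat) ^+ 2)^-1) by field.
rewrite -(mulr0 (2%:R^-1 : rat)); apply: eqmMl => //.
by apply: pint_half; apply: coprime2.
Qed.

Lemma pint_sum_nat p m k (F : nat -> rat) :
  (forall j, (m <= j < k)%N -> pint p (F j)) -> pint p (\sum_(m <= j < k) F j).
Proof.
move=> h; rewrite big_seq_cond; apply: pint_sum => j /andP[hj _].
by apply: h; rewrite -mem_index_iota.
Qed.

Lemma pint_prod_nat p m k (F : nat -> rat) :
  (forall j, (m <= j < k)%N -> pint p (F j)) -> pint p (\prod_(m <= j < k) F j).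
Proof.
move=> h; rewrite big_seq_cond; apply: pint_prod => j /andP[hj _].
by apply: h; rewrite -mem_index_iota.
Qed.

Lemma H1_full p n : prime p -> (3 < p)%N -> p = (2 * n + 1)%N ->
  eqm p 2 (\sum_(1 <= j < p) (j%:R : rat)^-1) 0.
Proof.
move=> pp p3 hpn.
have [r [hr Er]] := H2_half p n pp p3 hpn.
rewrite add0r expr1 in Er.
have S := split_sum n (fun j => (j%:R : rat)^-1).
rewrite -hpn /= in S; rewrite S.
set T := \sum_(1 <= j < n.+1) (((j%:R : rat) ^+ 2)^-1 * (((p - j)%N)%:R)^-1).
have E : \sum_(1 <= j < n.+1) ((j%:R : rat)^-1 + (((p - j)%N)%:R)^-1) =
   - p%:R * \sum_(1 <= j < n.+1) ((j%:R : rat) ^+ 2)^-1 + p%:R ^+ 2 * T.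
  rewrite mulr_sumr /T mulr_sumr -big_split /=.
  apply: eq_big_nat => j /andP[j1 jn].
  have j0 : (j%:R : rat) != 0 by rewrite pnatr_eq0 -lt0n.
  have pj0 : (((p - j)%N)%:R : rat) != 0 by rewrite pnatr_eq0 -lt0n subn_gt0; lia.
  have Hpj : (((p - j)%N)%:R : rat) = p%:R - j%:R by rewrite natrB //; lia.
  rewrite Hpj in pj0 *; field; rewrite j0 pj0 //.
exists (- r + T); split.
  apply: pintD; first exact: pintN.
  apply: pint_sum_nat => j /andP[j1 jn].
  apply: pintM; first by rewrite -exprVn; apply: pintX; apply: pint_invn => //; lia.
  by apply: pint_invn => //; lia.
rewrite E Er; ring.
Qed.

Definition H1 (m : nat) : rat := \sum_(1 <= j < m) (j%:R : rat)^-1.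
Definition H2 (m : nat) : rat := \sum_(1 <= j < m) ((j%:R : rat) ^+ 2)^-1.

Lemma pint_H1 p m : prime p -> (m <= p)%N -> pint p (H1 m).
Proof. by move=> pp mp; apply: pint_sum_nat => j hj; apply: pint_invn => //; lia. Qed.

Lemma pint_H2 p m : prime p -> (m <= p)%N -> pint p (H2 m).
Proof.
move=> pp mp; apply: pint_sum_nat => j hj; rewrite -exprVn; apply: pintX.
by apply: pint_invn => //; lia.
Qed.

Lemma prod_exp_nat p m t : prime p -> (3 < p)%N -> (m <= p)%N -> pint p t ->
  eqm p 3 (\prod_(1 <= j < m) (1 + p%:R * t / j%:R))
          (1 + p%:R * t * H1 m + (p%:R * t) ^+ 2 / 2%:R * (H1 m ^+ 2 - H2 m)).
Proof.
move=> pp p3 mp ht.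
have hs : forall x, x \in [seq (j%:R : rat)^-1 | j <- index_iota 1 m] -> pint p x.
  move=> x /mapP [j]; rewrite mem_index_iota => hj ->.
  by apply: pint_invn => //; lia.
have [r [hr E]] := prod_exp _ _ t (coprime2 p pp p3) hs ht.
rewrite !big_map in E.
exists r; split => //.
rewrite E /H1 /H2; congr (_ + _ + _ * (_ - _) + _).
by apply: eq_bigr => j _; rewrite exprVn.
Qed.

Lemma prod_shift (b : rat) m :
  \prod_(1 <= j < m.+1) (b + j%:R) = m`!%:R * \prod_(1 <= j < m.+1) (1 + b / j%:R).
Proof.
elim: m => [|m IH]; first by rewrite !big_nil fact0 mul1r.
rewrite big_nat_recr //= IH [in RHS]big_nat_recr //= factS natrM.
have m0 : (m.+1%:R : rat) != 0 by rewrite pnatr_eq0.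
set X := \prod_(1 <= j < m.+1) _. field; by rewrite addrC natr1.
Qed.

Lemma fact_shift_nat b m : ((b + m)`! = b`! * \prod_(1 <= j < m.+1) (b + j))%N.
Proof.
elim: m => [|m IH]; first by rewrite big_geq // addn0 muln1.
rewrite big_nat_recr //= addnS factS IH; ring.
Qed.

Lemma fact_shift (b m : nat) : ((b + m)`!%:R : rat) =
  b`!%:R * m`!%:R * \prod_(1 <= j < m.+1) (1 + b%:R / j%:R).
Proof.
rewrite fact_shift_nat natrM natr_prod -mulrA; congr (_ * _).
rewrite -prod_shift; apply: eq_bigr => j _; by rewrite natrD.
Qed.

Lemma bin_ratio a b c : a = (b + c)%N ->
  ('C(a, b)%:R : rat) = a`!%:R / (b`!%:R * c`!%:R).
Proof.
move=> ->; have := bin_fact (leq_addr c b); rewrite addKn => E.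
have b0 : (b`!%:R : rat) != 0 by rewrite pnatr_eq0 -lt0n fact_gt0.
have c0 : (c`!%:R : rat) != 0 by rewrite pnatr_eq0 -lt0n fact_gt0.
rewrite -E !natrM; field; by rewrite b0 c0.
Qed.

Definition Pi (p : nat) (t : rat) := \prod_(1 <= j < p) (1 + p%:R * t / j%:R).
Definition Lam (p n : nat) (t : rat) := \prod_(1 <= j < n.+1) (1 + p%:R * t / j%:R).

Lemma R0_lemma p n : p = (2 * n + 1)%N ->
  \prod_(1 <= j < n.+1) (1 + n%:R / j%:R) = (-1) ^+ n * Lam p n (-1) :> rat.
Proof.
move=> hp.
have n0 : (n`!%:R : rat) != 0 by rewrite pnatr_eq0 -lt0n fact_gt0.
have E1 := prod_shift (n%:R) n.
have E2 := prod_shift (- p%:R) n.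
have E3 : \prod_(1 <= j < n.+1) ((n%:R : rat) + j%:R) = \prod_(1 <= j < n.+1) (p%:R - j%:R).
  rewrite big_nat_rev /=; apply: eq_big_nat => j /andP[j1 jn].
  rewrite -natrD -natrB; last by lia.
  by congr (_%:R); lia.
have E4 : \prod_(1 <= j < n.+1) ((p%:R : rat) - j%:R) =
          (-1) ^+ n * \prod_(1 <= j < n.+1) (- p%:R + j%:R).
  have -> : ((-1 : rat) ^+ n = \prod_(1 <= j < n.+1) (-1)) by rewrite prodr_const_nat subn1.
  rewrite -big_split /=.
  by apply: eq_bigr => j _; ring.
have E5 : Lam p n (-1) = \prod_(1 <= j < n.+1) (1 + - p%:R / j%:R).
  by apply: eq_bigr => j _; rewrite mulrN1.
rewrite E5 -[LHS](mulKf n0) -E1 E3 E4 E2; field; exact n0.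
Qed.

Lemma G_formula p n : p = (2 * n + 1)%N ->
  G p (p.+1)./2 = (-1) ^+ n * p%:R * Pi p 1 ^+ 2 * Pi p 2%:R * Lam p n (-1)
                   / (Lam p n 1 * 2%:R ^+ (14 * n)).
Proof.
move=> hp.
have hk : ((p.+1)./2 = n.+1)%N.
  by rewrite (_ : p.+1 = n.+1.*2)%N ?doubleK // hp -mul2n; lia.
rewrite /G hk.
have -> : (2 * p + 2 * n.+1 = 6 * n + 4)%N by lia.
have -> : (8 * p - 2 * n.+1 - 4 = 14 * n + 2)%N by lia.
have -> : (2 * p - 2 * n.+1 = 2 * n)%N by lia.
have -> : (2 * p = 4 * n + 2)%N by lia.
have -> : (p + n.+1 = 3 * n + 2)%N by lia.
have -> : (p - n.+1 = n)%N by lia.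
have -> : (6 * n + 4 - 1 = 6 * n + 3)%N by lia.
rewrite !natrM.
rewrite (bin_ratio (4 * n + 2) p p); last by lia.
rewrite (bin_ratio (6 * n + 4) (3 * n + 2) (3 * n + 2)); last by lia.
rewrite (bin_ratio (2 * n) n n); last by lia.
rewrite (bin_ratio (3 * n + 2) p n.+1); last by lia.
rewrite (bin_ratio (2 * n.+1) n.+1 n.+1); last by lia.
have f42 := fact_shift p p; rewrite (_ : (p + p = 4 * n + 2)%N) in f42; last by lia.
have f64 := fact_shift (4 * n + 2) (2 * n.+1); rewrite (_ : (4 * n + 2 + 2 * n.+1 = 6 * n + 4)%N) in f64; last by lia.
have f32 := fact_shift p n.+1; rewrite (_ : (p + n.+1 = 3 * n + 2)%N) in f32; last by lia.
have f2n := fact_shift n n; rewrite (_ : (n + n = 2 * n)%N) in f2n; last by lia.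
have fp1 : ((2 * n.+1)`!%:R : rat) = p.+1%:R * p`!%:R.
  by rewrite (_ : (2 * n.+1 = p.+1)%N) ?factS ?natrM //; lia.
have fp : (p`!%:R : rat) = p%:R * (2 * n)`!%:R.
  by rewrite hp addn1 factS natrM.
have fn1 : (n.+1`!%:R : rat) = n.+1%:R * n`!%:R by rewrite factS natrM.
rewrite f64 f42 f32 fp1 fn1 fp.
have p1 : (1 <= p)%N by lia.
have pR0 : (p%:R : rat) != 0 by rewrite pnatr_eq0 -lt0n.
have Q1 : \prod_(1 <= j < p.+1) (1 + p%:R / j%:R) = Pi p 1 * 2%:R :> rat.
  rewrite big_nat_recr //= mulfV // /Pi; congr (_ * _); apply: eq_bigr => j _; by rewrite mulr1.
have Q2 : \prod_(1 <= j < (2 * n.+1).+1) (1 + (4 * n + 2)%:R / j%:R) =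
     Pi p 2%:R * 3%:R * (1 + p%:R * 2%:R / p.+1%:R) :> rat.
  rewrite (_ : (2 * n.+1).+1 = p.+2)%N; last by lia.
  rewrite (_ : (4 * n + 2)%:R = p%:R * 2%:R :> rat); last by rewrite -natrM; congr (_%:R); lia.
  rewrite big_nat_recr //= big_nat_recr //=.
  have h3 : (1 + p%:R * 2%:R / p%:R : rat) = 3%:R by rewrite mulrAC mulfV // mul1r; ring.
  rewrite h3 /Pi.
  by [].
have L1 : \prod_(1 <= j < n.+2) (1 + p%:R / j%:R) = Lam p n 1 * (1 + p%:R / n.+1%:R) :> rat.
  by rewrite big_nat_recr //= /Lam; congr (_ * _); apply: eq_bigr => j _; rewrite mulr1.
rewrite Q1 Q2 L1 f2n (R0_lemma p n hp).
have e1 : ((2 ^ (14 * n + 2))%:R : rat) = 4%:R * 2%:R ^+ (14 * n).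
  by rewrite natrX exprD mulrC.
have e2 : ((6 * n + 3)%:R : rat) = 3%:R * p%:R by rewrite -natrM; congr (_%:R); lia.
have e3 : (n.+1%:R : rat) = (p%:R + 1) / 2%:R.
  by rewrite hp natrD natrM; field.
have e4 : (p.+1%:R : rat) = p%:R + 1 by rewrite -addn1 natrD.
rewrite e1 e2 e3 e4.
have nf : (n`!%:R : rat) != 0 by rewrite pnatr_eq0 -lt0n fact_gt0.
have n2f : ((2 * n)`!%:R : rat) != 0 by rewrite pnatr_eq0 -lt0n fact_gt0.
have L0 : Lam p n 1 != 0.
  rewrite lt0r_neq0 // /Lam; apply: prodr_gt0 => j _.
  by rewrite mulr1 ltr_wpDr // divr_ge0.
have Lm0 : Lam p n (-1) != 0.
  have : (-1) ^+ n * Lam p n (-1) != 0.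
    rewrite -(R0_lemma p n hp) lt0r_neq0 //; apply: prodr_gt0 => j _.
    by rewrite ltr_wpDr // divr_ge0.
  by rewrite mulf_eq0 negb_or => /andP[].
have s1 : (p%:R + 1 : rat) != 0 by rewrite -e4 pnatr_eq0.
have s2 : (p%:R + 1 + p%:R * 2%:R : rat) != 0.
  by rewrite -e4 -natrM -natrD pnatr_eq0.
field.
by rewrite L0 nf Lm0 pR0 s1 s2 !expf_neq0 // oppr_eq0 oner_eq0.
Qed.

Lemma Pi_cong p n t : prime p -> (3 < p)%N -> p = (2 * n + 1)%N -> pint p t ->
  eqm p 3 (Pi p t) 1.
Proof.
move=> pp p3 hp ht.
have := prod_exp_nat p p t pp p3 (leqnn p) ht; rewrite -/(Pi p t) => E.
apply: (eqm_trans E).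
have [r1 [hr1 E1]] := H1_full p n pp p3 hp.
have [r2 [hr2 E2]] := sum_inv_sq p pp p3.
rewrite add0r in E1; rewrite add0r expr1 in E2.
rewrite /H1 /H2 E1 E2.
exists (t * r1 + t ^+ 2 / 2%:R * (p%:R ^+ 3 * r1 ^+ 2 - r2)); split; last by field.
apply: pintD; first exact: pintM.
apply: pintM; first by apply: pintM; [exact: pintX | apply: pint_half; exact: coprime2].
apply: pintB => //; apply: pintM; [apply: pintX; exact: pint_nat | exact: pintX].
Qed.

Definition Aexp (p n : nat) (t : rat) :=
  1 + p%:R * t * H1 n.+1 + (p%:R * t) ^+ 2 / 2%:R * (H1 n.+1 ^+ 2 - H2 n.+1).

Lemma Lam_exp p n t : prime p -> (3 < p)%N -> p = (2 * n + 1)%N -> pint p t ->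
  eqm p 3 (Lam p n t) (Aexp p n t).
Proof.
move=> pp p3 hp ht.
by apply: prod_exp_nat => //; lia.
Qed.

Lemma pint_Aexp p n t : prime p -> (3 < p)%N -> p = (2 * n + 1)%N -> pint p t ->
  pint p (Aexp p n t).
Proof.
move=> pp p3 hp ht.
have h1 : pint p (H1 n.+1) by apply: pint_H1 => //; lia.
have h2 : pint p (H2 n.+1) by apply: pint_H2 => //; lia.
have hP : pint p p%:R by exact: pint_nat.
apply: pintD; first by apply: pintD; [exact: pint1 | apply: pintM => //; exact: pintM].
apply: pintM; last by apply: pintB => //; exact: pintX.
apply: pintM; first by apply: pintX; exact: pintM.
by apply: pint_half; exact: coprime2.
Qed.

Lemma pint_Lam p n t : prime p -> (n < p)%N -> pint p t -> pint p (Lam p n t).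
Proof.
move=> pp np ht; apply: pint_prod_nat => j hj.
apply: pintD; first exact: pint1.
apply: pintM; first by apply: pintM => //; exact: pint_nat.
by apply: pint_invn => //; lia.
Qed.

Lemma pint_Pi p t : prime p -> pint p t -> pint p (Pi p t).
Proof.
move=> pp ht; apply: pint_prod_nat => j hj.
apply: pintD; first exact: pint1.
apply: pintM; first by apply: pintM => //; exact: pint_nat.
by apply: pint_invn => //; lia.
Qed.

Lemma Lam_pm p n : prime p -> (3 < p)%N -> p = (2 * n + 1)%N ->
  eqm p 3 (Lam p n 1 * Lam p n (-1)) 1.
Proof.
move=> pp p3 hp.
have h1 := Lam_exp p n 1 pp p3 hp (pint1 p).
have h2 := Lam_exp p n (-1) pp p3 hp (pintN _ _ (pint1 p)).
apply: (eqm_trans (eqmM _ _ h1 h2)).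
- by apply: pint_Aexp => //; exact: pint1.
- by apply: pint_Lam => //; [lia | apply: pintN; exact: pint1].
have [r [hr E]] := H2_half p n pp p3 hp.
rewrite add0r expr1 in E.
set e1 := H1 n.+1.
exists (- r + p%:R * ((e1 ^+ 2 - H2 n.+1) / 2%:R) ^+ 2); split.
  apply: pintD; first exact: pintN.
  apply: pintM; first exact: pint_nat.
  apply: pintX; apply: pintM; last by apply: pint_half; exact: coprime2.
  apply: pintB; first by apply: pintX; apply: pint_H1 => //; lia.
  by apply: pint_H2 => //; lia.
by rewrite /Aexp -/e1 /H2 E; field.
Qed.

Lemma fact_double n : ((2 * n)`! = 2 ^ n * n`! * \prod_(1 <= j < n.+1) (2 * j - 1))%N.
Proof.
elim: n => [|n IH]; first by rewrite big_geq.
rewrite big_nat_recr //= (_ : 2 * n.+1 = (2 * n).+2)%N; last by lia.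
rewrite !factS IH (_ : ((2 * n).+2 - 1 = (2 * n).+1)%N); last by lia.
rewrite expnS; ring.
Qed.

Lemma prod_nat_id p n : p = (2 * n + 1)%N ->
  (\prod_(1 <= j < n.+1) (p - j) = 2 ^ n * \prod_(1 <= j < n.+1) (p - 2 * j))%N.
Proof.
move=> hp.
have E1 : (\prod_(1 <= j < n.+1) (p - j) = \prod_(1 <= j < n.+1) (n + j))%N.
  rewrite big_nat_rev /=; apply: eq_big_nat => j /andP[j1 jn]; lia.
have E2 : (\prod_(1 <= j < n.+1) (p - 2 * j) = \prod_(1 <= j < n.+1) (2 * j - 1))%N.
  rewrite big_nat_rev /=; apply: eq_big_nat => j /andP[j1 jn]; lia.
have E3 := fact_shift_nat n n.
rewrite (_ : n + n = 2 * n)%N in E3; last by lia.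
rewrite fact_double in E3.
rewrite E1 E2; apply/eqP; rewrite -(eqn_pmul2l (fact_gt0 n)); apply/eqP.
rewrite -E3; ring.
Qed.

Lemma Lam_double p n : p = (2 * n + 1)%N ->
  Lam p n (-1) = 4%:R ^+ n * Lam p n (- 2%:R^-1).
Proof.
move=> hp.
have E1 : Lam p n (-1) = \prod_(1 <= j < n.+1) ((p - j)%N%:R : rat) * \prod_(1 <= j < n.+1) (- (j%:R : rat)^-1).
  rewrite -big_split /=; apply: eq_big_nat => j /andP[j1 jn].
  have j0 : (j%:R : rat) != 0 by rewrite pnatr_eq0 -lt0n.
  rewrite natrB; last by lia.
  by field.
have E2 : Lam p n (- 2%:R^-1) = \prod_(1 <= j < n.+1) ((p - 2 * j)%N%:R : rat) * (2%:R^-1) ^+ n * \prod_(1 <= j < n.+1) (- (j%:R : rat)^-1).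
  have -> : ((2%:R^-1 : rat) ^+ n = \prod_(1 <= j < n.+1) 2%:R^-1) by rewrite prodr_const_nat subn1.
  rewrite -!big_split /=; apply: eq_big_nat => j /andP[j1 jn].
  have j0 : (j%:R : rat) != 0 by rewrite pnatr_eq0 -lt0n.
  rewrite natrB; last by lia.
  by rewrite natrM; field.
have E3 : \prod_(1 <= j < n.+1) ((p - j)%N%:R : rat) = 2%:R ^+ n * \prod_(1 <= j < n.+1) ((p - 2 * j)%N%:R : rat).
  by rewrite -!natr_prod (prod_nat_id p n hp) natrM natrX.
rewrite E1 E2 E3 (_ : 4%:R = 2%:R ^+ 2 :> rat); last by rewrite -natrX.
rewrite -exprM mulnC exprM exprVn.
have X0 : (2%:R ^+ n : rat) != 0 by rewrite expf_neq0.
set X := (2%:R ^+ n : rat); set Y := \prod_(1 <= j < n.+1) _; set Z := \prod_(1 <= j < n.+1) _.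
by field.
Qed.

Lemma inv_prod_lemma p m (F : nat -> rat) (a b : nat -> nat) (neg : bool) :
  (forall j, (1 <= j < m)%N ->
     [/\ F j = (-1) ^+ neg * ((a j)%:R / (b j)%:R), coprime p (a j), (0 < a j)%N & (0 < b j)%N]) ->
  pint p (\prod_(1 <= j < m) F j)^-1 /\ \prod_(1 <= j < m) F j != 0.
Proof.
move=> h; split.
  rewrite -prodfV; apply: pint_prod_nat => j hj.
  have [-> ca a0 b0] := h j hj.
  rewrite invfM invf_div; apply: pintM.
    by rewrite -exprVn invrN invr1; apply: pintX; apply: pintN; exact: pint1.
  apply: pintM; first exact: pint_nat.
  exact: pintV.
rewrite prodf_seq_neq0; apply/allP => j; rewrite mem_index_iota => hj /=.
have [-> ca a0 b0] := h j hj.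
rewrite mulf_eq0 negb_or expf_neq0 ?oppr_eq0 ?oner_eq0 //=.
by rewrite lt0r_neq0 // divr_gt0 // ltr0n.
Qed.

Lemma Z_props p n : prime p -> p = (2 * n + 1)%N ->
  pint p (Lam p n (- 2%:R^-1))^-1 /\ Lam p n (- 2%:R^-1) != 0.
Proof.
move=> pp hp; apply: (inv_prod_lemma _ _ _ (fun j => (p - 2 * j)%N) (fun j => (2 * j)%N) true).
move=> j hj; split => /=.
- have j0 : (j%:R : rat) != 0 by rewrite pnatr_eq0 -lt0n; case/andP: hj.
  rewrite natrB; last by lia.
  by rewrite natrM; field.
- by apply: cop_lt => //; lia.
- lia.
- lia.
Qed.

Lemma L1_props p n : prime p -> p = (2 * n + 1)%N ->
  pint p (Lam p n 1)^-1 /\ Lam p n 1 != 0.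
Proof.
move=> pp hp; apply: (inv_prod_lemma _ _ _ (fun j => (p + j)%N) (fun j => j) false).
move=> j hj; split => /=.
- have j0 : (j%:R : rat) != 0 by rewrite pnatr_eq0 -lt0n; case/andP: hj.
  by rewrite natrD expr0 mul1r; field.
- rewrite prime_coprime // dvdn_addr //.
  by rewrite -prime_coprime //; apply: cop_lt => //; lia.
- lia.
- lia.
Qed.

Lemma Lam_half_sq p n : prime p -> (3 < p)%N -> p = (2 * n + 1)%N ->
  eqm p 3 (Lam p n (- 2%:R^-1) ^+ 2) (Lam p n (-1)).
Proof.
move=> pp p3 hp.
have c2 := coprime2 p pp p3.
have ht : pint p (- 2%:R^-1) by apply: pintN; exact: pint_half.
have hm1 : pint p (-1) by apply: pintN; exact: pint1.
have h := Lam_exp p n _ pp p3 hp ht.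
have hm := Lam_exp p n _ pp p3 hp hm1.
have s1 : eqm p 3 (Lam p n (- 2%:R^-1) ^+ 2) (Aexp p n (- 2%:R^-1) ^+ 2).
  rewrite !expr2; apply: (eqmM _ _ h h).
  - exact: pint_Aexp.
  - by apply: pint_Lam => //; lia.
apply: (eqm_trans s1); apply: eqm_trans (eqm_sym hm).
have [r [hr E]] := H2_half p n pp p3 hp.
rewrite add0r expr1 in E.
set e1 := H1 n.+1.
set c := (e1 ^+ 2 - H2 n.+1) / 2%:R.
exists (r / 4%:R - e1 * c / 4%:R + p%:R * c ^+ 2 / 16%:R); split.
  have he1 : pint p e1 by apply: pint_H1 => //; lia.
  have hc : pint p c.
    apply: pintM; last exact: pint_half.
    by apply: pintB; [exact: pintX | apply: pint_H2 => //; lia].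
  have h4 : pint p 4%:R^-1 by apply: pintV => //; rewrite (_ : 4 = 2 * 2)%N // coprimeMr c2.
  have h16 : pint p 16%:R^-1 by apply: pintV => //; rewrite (_ : 16 = 2 ^ 4)%N // coprimeXr.
  apply: pintD; first by apply: pintB; apply: pintM => //; exact: pintM.
  by apply: pintM => //; apply: pintM; [exact: pint_nat | exact: pintX].
by rewrite /Aexp -/e1 /c /H2 E; field.
Qed.

Lemma Lam_m1_cong p n : prime p -> (3 < p)%N -> p = (2 * n + 1)%N ->
  eqm p 3 (Lam p n (-1)) ((4%:R ^+ n) ^+ 2).
Proof.
move=> pp p3 hp.
have [hZi hZ0] := Z_props p n pp hp.
have hd := Lam_double p n hp.
have hs := Lam_half_sq p n pp p3 hp.
set Z := Lam p n (- 2%:R^-1) in hZi hZ0 hd hs.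
set u := (4%:R ^+ n : rat) in hd *.
have hu : pint p u by apply: pintX; exact: pint_nat.
rewrite hd in hs.
have hZu : eqm p 3 Z u.
  have := eqmMl hZi hs.
  have -> : Z^-1 * Z ^+ 2 = Z by rewrite expr2 mulKf.
  by rewrite mulrCA mulVf // mulr1.
rewrite hd expr2; apply: eqmMl => //.
Qed.

Lemma fermat_props p n : prime p -> (3 < p)%N -> p = (2 * n + 1)%N ->
  pint p (fermat_q2 p) /\ (4%:R ^+ n : rat) = 1 + p%:R * fermat_q2 p.
Proof.
move=> pp p3 hp.
have c2 := coprime2 p pp p3.
have pR0 : (p%:R : rat) != 0 by rewrite pnatr_eq0 -lt0n prime_gt0.
have hd : (p %| 2 ^ p.-1 - 1)%N.
  have F := fermat_little 2 pp.
  rewrite -(prednK (prime_gt0 pp)) expnS in F.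
  have /eqP := F; rewrite eqn_mod_dvd; last by rewrite leq_pmulr // expn_gt0.
  rewrite (prednK (prime_gt0 pp)).
  have -> : (2 * 2 ^ p.-1 - 2 = 2 * (2 ^ p.-1 - 1))%N by rewrite mulnBr muln1.
  by rewrite Gauss_dvdr.
split.
  by rewrite /fermat_q2 -natq_div //; exact: pint_nat.
rewrite /fermat_q2 natrB ?expn_gt0 //.
have -> : (p.-1 = 2 * n)%N by lia.
rewrite natrX exprM (_ : 2%:R ^+ 2 = 4%:R :> rat); last by rewrite -natrX.
by field.
Qed.

Theorem lemma2p4 (p : nat) (hp : prime p) (hp3 : (3 < p)%N) :
  rat_eqmod p 4 (G p (p.+1)./2)
    ((-1) ^+ (p.-1)./2 * p%:R
       * (1 - 3%:R * p%:R * fermat_q2 p + 6%:R * p%:R ^+ 2 * fermat_q2 p ^+ 2)).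
Proof.
have podd : odd p by case: (even_prime hp) => // h; rewrite h in hp3.
set n := p./2.
have hpn : p = (2 * n + 1)%N.
  by rewrite -{1}(odd_double_half p) podd -/n -mul2n addnC.
have hn : ((p.-1)./2 = n)%N by rewrite hpn addn1 /= mul2n doubleK.
rewrite hn (G_formula p n hpn).
have A1 := Pi_cong p n 1 hp hp3 hpn (pint1 p).
have A2 := Pi_cong p n 2%:R hp hp3 hpn (pint_nat p 2).
have B1 := Lam_pm p n hp hp3 hpn.
have B2 := Lam_m1_cong p n hp hp3 hpn.
have [hq hu] := fermat_props p n hp hp3 hpn.
have [hL1i hL10] := L1_props p n hp hpn.
have hPi1 : pint p (Pi p 1) by apply: pint_Pi => //; exact: pint1.
have hPi2 : pint p (Pi p 2%:R) by apply: pint_Pi => //; exact: pint_nat.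
have hLm : pint p (Lam p n (-1)) by apply: pint_Lam => //; [lia | apply: pintN; exact: pint1].
set q := fermat_q2 p in hq hu *.
set u := (4%:R ^+ n : rat) in hu B2.
have hupint : pint p u by apply: pintX; exact: pint_nat.
have hui : pint p (u ^+ 7)^-1.
  rewrite /u -exprM -natrX; apply: pintV; last by rewrite expn_gt0.
  by rewrite coprimeXr // (_ : 4 = 2 * 2)%N // coprimeMr coprime2.
have u0 : u != 0 by rewrite /u expf_neq0 // pnatr_eq0.
have e2 : (2%:R ^+ (14 * n) : rat) = u ^+ 7.
  by rewrite /u -!exprM (_ : 4%:R = 2%:R ^+ 2 :> rat) ?(natrX) // -exprM; congr (_ ^+ _); lia.
set Pi1 := Pi p 1 in A1 hPi1 *; set Pi2 := Pi p 2%:R in A2 hPi2 *.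
set L1 := Lam p n 1 in B1 hL1i hL10 *; set Lm := Lam p n (-1) in B1 B2 hLm *.
have eL : eqm p 3 L1^-1 (u ^+ 2).
  apply: eqm_trans B2; apply: eqm_sym.
  have := eqmMl hL1i B1; by rewrite mulrA mulVf // mul1r mulr1.
have ea : eqm p 3 (Pi1 * Pi1) (1 * 1) by apply: eqmM => //; exact: pint1.
have eb : eqm p 3 (Pi1 * Pi1 * Pi2) (1 * 1 * 1) by apply: eqmM => //; apply: pintM; exact: pint1.
have ec : eqm p 3 (Lm * L1^-1) (u ^+ 2 * u ^+ 2) by apply: eqmM => //; exact: pintX.
have ed : eqm p 3 (Pi1 * Pi1 * Pi2 * (Lm * L1^-1)) (1 * 1 * 1 * (u ^+ 2 * u ^+ 2)).
  apply: eqmM => //; [apply: pintM; [apply: pintM|]; exact: pint1 | exact: pintM].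
have ee : eqm p 3 (Pi1 * Pi1 * Pi2 * (Lm * L1^-1) * (u ^+ 7)^-1) (1 * 1 * 1 * (u ^+ 2 * u ^+ 2) * (u ^+ 7)^-1).
  apply: eqmM => //; last exact: eqm_refl.
  by apply: pintM; [apply: pintM; [apply: pintM|]; exact: pint1 | apply: pintM; exact: pintX].
have ef : eqm p 3 (1 * 1 * 1 * (u ^+ 2 * u ^+ 2) * (u ^+ 7)^-1)
                 (1 - 3%:R * p%:R * q + 6%:R * p%:R ^+ 2 * q ^+ 2).
  exists (- ((u ^+ 7)^-1 * u ^+ 4) * q ^+ 3 * (10%:R + 15%:R * p%:R * q + 6%:R * p%:R ^+ 2 * q ^+ 2)); split.
    apply: pintM; last first.
      apply: pintD; first by apply: pintD; [exact: pint_nat | apply: pintM => //; apply: pintM; exact: pint_nat].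
      by apply: pintM; [apply: pintM; [exact: pint_nat | apply: pintX; exact: pint_nat] | exact: pintX].
    by apply: pintM; [apply: pintN; apply: pintM => //; exact: pintX | exact: pintX].
  by rewrite hu in u0 *; field.
have [r [hr E]] := eqm_trans ee ef.
exists ((-1) ^+ n * r); split; last first.
  apply: pint_den; apply: pintM => //; apply: pintX; apply: pintN; exact: pint1.
have EX : (-1) ^+ n * p%:R * Pi1 ^+ 2 * Pi2 * Lm / (L1 * 2%:R ^+ (14 * n)) =
   (-1) ^+ n * p%:R * (Pi1 * Pi1 * Pi2 * (Lm * L1^-1) * (u ^+ 7)^-1).
  by rewrite e2; field; rewrite hL10 expf_neq0.
rewrite EX E natrX; ring.
Qed.
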